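(* If $\Gamma\Vdash t:A$ is derivable in the type system $\lambda 2^{la}$, then $t$ is strongly normalising (for the reduction $\to$ of Lineal).
   Context: Fix a commutative ring $(\mathcal{S},+,\times)$ of scalars. Terms of the linear-algebraic $\lambda$-calculus (Lineal): $t,r,u ::= b \mid (t)\,r \mid \mathbf{0} \mid \alpha.t \mid t+r$, with basis terms $b ::= x \mid \lambda x\,t$. Terms are considered modulo associativity and commutativity of $+$. Substitution $t[b/x]$ is capture-avoiding, with $(\alpha.t+\beta.u)[b/x]=\alpha.(t[b/x])+\beta.(u[b/x])$. One-step reduction $\to$ is the closure under term contexts (modulo AC of $+$) of: $t+\mathbf 0\to t$; $0.t\to\mathbf 0$; $1.t\to t$; $\alpha.\mathbf 0\to\mathbf 0$; $\alpha.(\beta.t)\to(\alpha\times\beta).t$; $\alpha.(t+r)\to\alpha.t+\alpha.r$; $\alpha.t+\beta.t\to(\alpha+\beta).t$, $\alpha.t+t\to(\alpha+1).t$, $t+t\to(1+1).t$ (only if $t$ is a closed normal term); $(t+r)\,u\to(t)\,u+(r)\,u$ and $(u)\,(t+r)\to(u)\,t+(u)\,r$ (only if $t+r$ is a closed normal term); $(\alpha.t)\,r\to\alpha.(t)\,r$ and $(r)\,(\alpha.t)\to\alpha.(r)\,t$ (only if $t$ is a closed normal term); $(\mathbf 0)\,t\to\mathbf 0$; $(t)\,\mathbf 0\to\mathbf 0$; $(\lambda x\,t)\,b\to t[b/x]$ (only if $b$ is a basis term). The type system $\lambda 2^{la}$ has types $A,B ::= X \mid A\to B \mid \forall X.A$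 and contexts $\Gamma$ assigning such types to distinct term variables. Its rules are those of System F: $\Gamma,x:A\Vdash x:A$; from $\Gamma,x:A\Vdash t:B$ infer $\Gamma\Vdash\lambda x\,t:A\to B$; from $\Gamma\Vdash t:A\to B$ and $\Gamma\Vdash r:A$ infer $\Gamma\Vdash (t)\,r:B$; from $\Gamma\Vdash t:\forall X.A$ infer $\Gamma\Vdash t:A[B/X]$; from $\Gamma\Vdash t:A$ with $X$ not free in $\Gamma$ infer $\Gamma\Vdash t:\forall X.A$; together with: $\Gamma\Vdash\mathbf 0:A$ for any $A$; from $\Gamma\Vdash t:A$ and $\Gamma\Vdash r:A$ infer $\Gamma\Vdash t+r:A$; from $\Gamma\Vdash t:A$ infer $\Gamma\Vdash\alpha.t:A$ for any $\alpha\in\mathcal S$. *)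

(* Defs.v *)
From mathcomp Require Import all_boot all_algebra.
Set Implicit Arguments. Unset Strict Implicit. Unset Printing Implicit Defensive.
Import GRing.Theory.
Local Open Scope ring_scope.

Section Lineal.
Variable S : comPzRingType.

Inductive term : Type :=
| Var of nat
| Lam of term
| App of term & term
| Zero
| Scal of S & term
| Plus of term & term.

Definition basis (t : term) : Prop :=
  match t with Var _ | Lam _ => True | _ => False end.

Fixpoint tsize (t : term) : nat :=
  match t with
  | Var _ | Zero => 1
  | Lam t | Scal _ t => (tsize t).+1
  | App t r | Plus t r => (tsize t + tsize r).+1
  end.

Fixpoint closed_at (k : nat) (t : term) : Prop :=
  match t with
  | Var n => (n < k)%N
  | Lam t => closed_at k.+1 t
  | App t r | Plus t r => closed_at k t /\ closed_at k r
  | Zero => True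
  | Scal _ t => closed_at k t
  end.
Definition closed (t : term) : Prop := closed_at 0 t.

Fixpoint lift (d c : nat) (t : term) : term :=
  match t with
  | Var n => if (n < c)%N then Var n else Var (n + d)
  | Lam t => Lam (lift d c.+1 t)
  | App t r => App (lift d c t) (lift d c r)
  | Zero => Zero
  | Scal a t => Scal a (lift d c t)
  | Plus t r => Plus (lift d c t) (lift d c r)
  end.

Fixpoint subst (n : nat) (u t : term) : term :=
  match t with
  | Var m => if (m < n)%N then Var m else if m == n then lift n 0 u
             else Var m.-1
  | Lam t => Lam (subst n.+1 u t)
  | App t r => App (subst n u t) (subst n u r)
  | Zero => Zero
  | Scal a t => Scal a (subst n u t)
  | Plus t r => Plus (subst n u t) (subst n u r)
  end.

Inductive ac_eq : term -> term -> Prop :=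
| ac_refl t : ac_eq t t
| ac_sym t r : ac_eq t r -> ac_eq r t
| ac_trans t r u : ac_eq t r -> ac_eq r u -> ac_eq t u
| ac_assoc t r u : ac_eq (Plus t (Plus r u)) (Plus (Plus t r) u)
| ac_comm t r : ac_eq (Plus t r) (Plus r t)
| ac_lam t t' : ac_eq t t' -> ac_eq (Lam t) (Lam t')
| ac_app t t' r r' : ac_eq t t' -> ac_eq r r' -> ac_eq (App t r) (App t' r')
| ac_scal a t t' : ac_eq t t' -> ac_eq (Scal a t) (Scal a t')
| ac_plus t t' r r' : ac_eq t t' -> ac_eq r r' -> ac_eq (Plus t r) (Plus t' r').

(* Head rules, parameterised by the predicate N = "is a closed normal term". *)
Inductive head (N : term -> Prop) : term -> term -> Prop :=
| h_plus0 t : head N (Plus t Zero) t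
| h_scal0 t : head N (Scal 0 t) Zero
| h_scal1 t : head N (Scal 1 t) t
| h_scalZ a : head N (Scal a Zero) Zero
| h_scalS a b t : head N (Scal a (Scal b t)) (Scal (a * b) t)
| h_scalD a t r : head N (Scal a (Plus t r)) (Plus (Scal a t) (Scal a r))
| h_fact a b t : N t -> head N (Plus (Scal a t) (Scal b t)) (Scal (a + b) t)
| h_fact1 a t : N t -> head N (Plus (Scal a t) t) (Scal (a + 1) t)
| h_fact2 t : N t -> head N (Plus t t) (Scal (1 + 1) t)
| h_appDl t r u : N (Plus t r) ->
    head N (App (Plus t r) u) (Plus (App t u) (App r u))
| h_appDr u t r : N (Plus t r) ->
    head N (App u (Plus t r)) (Plus (App u t) (App u r))
| h_appSl a t r : N t -> head N (App (Scal a t) r) (Scal a (App t r))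
| h_appSr r a t : N t -> head N (App r (Scal a t)) (Scal a (App r t))
| h_app0l t : head N (App Zero t) Zero
| h_app0r t : head N (App t Zero) Zero
| h_beta t b : basis b -> head N (App (Lam t) b) (subst 0 b t).

Inductive ctx (N : term -> Prop) : term -> term -> Prop :=
| c_head t r : head N t r -> ctx N t r
| c_lam t t' : ctx N t t' -> ctx N (Lam t) (Lam t')
| c_appl t t' r : ctx N t t' -> ctx N (App t r) (App t' r)
| c_appr t r r' : ctx N r r' -> ctx N (App t r) (App t r')
| c_scal a t t' : ctx N t t' -> ctx N (Scal a t) (Scal a t')
| c_plusl t t' r : ctx N t t' -> ctx N (Plus t r) (Plus t' r)
| c_plusr t r r' : ctx N r r' -> ctx N (Plus t r) (Plus t r').

Definition redN (N : term -> Prop) (t r : term) : Prop :=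
  exists t' r', [/\ ac_eq t t', ctx N t' r' & ac_eq r' r].

(* Normality is defined by recursion on size: the side conditions of the
   rules applied to t only mention strictly smaller terms, so fuel
   (tsize t).+1 suffices (nf_fuel k s is independent of k > tsize s). *)
Fixpoint nf_fuel (k : nat) (t : term) : Prop :=
  match k with
  | 0 => False
  | k.+1 => ~ exists r, redN (fun s => closed s /\ nf_fuel k s) t r
  end.

Definition normal (t : term) : Prop := nf_fuel (tsize t).+1 t.
Definition closed_normal (t : term) : Prop := closed t /\ normal t.

Definition red (t r : term) : Prop := redN closed_normal t r.

Definition SN (t : term) : Prop := Acc (fun u v => red v u) t.

End Lineal.

Inductive ty : Type :=
| TVar of nat
| TArr of ty & ty
| TAll of ty.

Fixpoint tlift (d c : nat) (A : ty) : ty :=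
  match A with
  | TVar n => if (n < c)%N then TVar n else TVar (n + d)
  | TArr A B => TArr (tlift d c A) (tlift d c B)
  | TAll A => TAll (tlift d c.+1 A)
  end.

Fixpoint tsubst (n : nat) (B A : ty) : ty :=
  match A with
  | TVar m => if (m < n)%N then TVar m else if m == n then tlift n 0 B
              else TVar m.-1
  | TArr A1 A2 => TArr (tsubst n B A1) (tsubst n B A2)
  | TAll A => TAll (tsubst n.+1 B A)
  end.

(* Typing of lambda2^la; a context maps de Bruijn index i to its i-th entry.
   Generalisation: the side condition "X not free in Gamma" is realised by
   shifting the type variables of Gamma. *)
Inductive typed (S : comPzRingType) : seq ty -> term S -> ty -> Prop :=
| T_var G n A : onth G n = Some A -> typed G (Var S n) A
| T_lam G t A B : typed (A :: G) t B -> typed G (Lam t) (TArr A B)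
| T_app G t r A B : typed G t (TArr A B) -> typed G r A -> typed G (App t r) B
| T_inst G t A B : typed G t (TAll A) -> typed G t (tsubst 0 B A)
| T_gen G t A : typed (map (tlift 1 0) G) t A -> typed G t (TAll A)
| T_zero G A : typed G (Zero S) A
| T_plus G t r A : typed G t A -> typed G r A -> typed G (Plus t r) A
| T_scal G a t A : typed G t A -> typed G (Scal a t) A.

(* Main.v *)
Require Import Defs.
From Stdlib Require Import List Permutation Relations Wellfounded.Transitive_Closure.
Set Implicit Arguments.

Section Mult.
Variable A : Type.
Variable E : A -> A -> Prop.
Hypothesis E_refl : forall x, E x x.
Hypothesis E_sym : forall x y, E x y -> E y x.
Hypothesis E_trans : forall x y z, E x y -> E y z -> E x z.
Variable lt : A -> A -> Prop.
Hypothesis lt_inv : forall x x' y y', E x x' -> E y y' -> lt x y -> lt x' y'.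

Definition PermE (l l' : list A) := exists l1, Permutation l l1 /\ Forall2 E l1 l'.

Lemma Forall2_refl l : Forall2 E l l.
Proof. induction l; constructor; auto. Qed.

Lemma Forall2_trans l1 l2 l3 : Forall2 E l1 l2 -> Forall2 E l2 l3 -> Forall2 E l1 l3.
Proof.
intros H; revert l3; induction H; intros l3 H3; inversion H3; subst; constructor; eauto.
Qed.

Lemma Forall2_symm l1 l2 : Forall2 E l1 l2 -> Forall2 E l2 l1.
Proof. induction 1; constructor; auto. Qed.

Lemma PermE_refl l : PermE l l.
Proof. exists l; split; [apply Permutation_refl | apply Forall2_refl]. Qed.

Lemma Perm_PermE l l' : Permutation l l' -> PermE l l'.
Proof. intros; exists l'; split; auto using Forall2_refl. Qed.

Lemma F2_perm_r l1 l2 l2' : Forall2 E l1 l2 -> Permutation l2 l2' ->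
  exists l1', Permutation l1 l1' /\ Forall2 E l1' l2'.
Proof.
intros H P.
destruct (Permutation_Forall2 P (Forall2_symm H)) as [l1' [P1 F1]].
exists l1'; split; auto using Forall2_symm.
Qed.

Lemma PermE_trans l l' l'' : PermE l l' -> PermE l' l'' -> PermE l l''.
Proof.
intros [l1 [P1 F1]] [l2 [P2 F2]].
destruct (F2_perm_r F1 P2) as [l1' [P1' F1']].
exists l1'; split; [eapply Permutation_trans; eauto | eapply Forall2_trans; eauto].
Qed.

Lemma PermE_sym l l' : PermE l l' -> PermE l' l.
Proof.
intros [l1 [P1 F1]].
destruct (F2_perm_r (Forall2_symm F1) (Permutation_sym P1)) as [m [Pm Fm]].
exists m; split; auto.
Qed.

Lemma PermE_app l l' m m' : PermE l l' -> PermE m m' -> PermE (l ++ m) (l' ++ m').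
Proof.
intros [l1 [P1 F1]] [m1 [Q1 G1]]; exists (l1 ++ m1); split.
- apply Permutation_app; auto.
- apply Forall2_app; auto.
Qed.

Lemma PermE_In (P : A -> Prop) l l' : (forall x y, E x y -> P x -> P y) ->
  PermE l l' -> (forall x, In x l -> P x) -> forall y, In y l' -> P y.
Proof.
intros HP [l1 [P1 F1]] H y Hy.
assert (H1 : forall x, In x l1 -> P x) by (intros x Hx; apply H; eapply Permutation_in; [apply Permutation_sym; eauto| eauto]).
clear H P1. induction F1; simpl in *; [contradiction|].
destruct Hy as [<-|Hy]; eauto.
Qed.

Definition StepP (l' l : list A) := exists a K M, Permutation l (a :: M) /\
  Permutation l' (K ++ M) /\ forall k, In k K -> lt k a.

Definition W := Acc StepP.

Lemma W_perm l l' : W l -> Permutation l l' -> W l'.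
Proof.
intros H P; constructor; intros y [a [K [M [H1 [H2 H3]]]]].
apply (Acc_inv H); exists a, K, M; split; [eapply Permutation_trans; eauto|auto].
Qed.

Lemma W_app_lt a K M : W M -> (forall b M, lt b a -> W M -> W (b :: M)) ->
  (forall k, In k K -> lt k a) -> W (K ++ M).
Proof.
intros HM H; induction K; simpl; intros HK; auto.
Qed.

Lemma W_A a M0 : W M0 -> (forall b M, lt b a -> W M -> W (b :: M)) ->
  (forall M, StepP M M0 -> W (a :: M)) -> W (a :: M0).
Proof.
intros HW H1 H2; constructor; intros N [a' [K [M' [P1 [P2 P3]]]]].
assert (Hin : In a' (a :: M0)) by (eapply Permutation_in; [apply Permutation_sym; eauto| left; auto]).
destruct Hin as [<- | Hin].
- apply Permutation_cons_inv in P1.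
  apply W_perm with (K ++ M0); [apply W_app_lt with a; auto|].
  eapply Permutation_trans; [apply Permutation_app_head; eauto| apply Permutation_sym; auto].
- destruct (in_split _ _ Hin) as [M1 [M2 ->]].
  assert (P4 : Permutation M' (a :: M1 ++ M2)).
  { apply (@Permutation_cons_app_inv _ M' (a :: M1) M2 a'). apply Permutation_sym; exact P1. }
  apply W_perm with (a :: K ++ M1 ++ M2).
  + apply H2. exists a', K, (M1 ++ M2); split; [|split]; auto.
    apply Permutation_sym, Permutation_middle.
  + apply Permutation_sym. eapply Permutation_trans; [apply P2|].
    eapply Permutation_trans; [apply Permutation_app_head; apply P4|].
    apply Permutation_sym, Permutation_middle.
Qed.

Lemma W_B a : (forall b M, lt b a -> W M -> W (b :: M)) -> forall M0, W M0 -> W (a :: M0).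
Proof.
intros H M0 HW; induction HW as [M0 HA IH].
apply W_A; [constructor; exact HA | exact H | exact IH].
Qed.

Lemma W_C a : Acc lt a -> forall M, W M -> W (a :: M).
Proof.
induction 1 as [a _ IH]; intros M HM; apply W_B; auto.
Qed.

Lemma mult_acc l : (forall x, In x l -> Acc lt x) -> W l.
Proof.
induction l; intros H.
- constructor; intros y [a [K [M [P _]]]]. apply Permutation_nil in P; discriminate.
- apply W_C; auto. apply H; left; auto. apply IHl; intros; apply H; right; auto.
Qed.

Definition LtE (l' l : list A) := exists a K M, PermE l (a :: M) /\
  PermE l' (K ++ M) /\ forall k, In k K -> lt k a.

Lemma W_LtE l : W l -> forall l', PermE l l' -> Acc LtE l'.
Proof.
induction 1 as [l _ IH]; intros l' Hl; constructor; intros y [a [K [M [H1 [H2 H3]]]]].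
destruct (PermE_trans Hl H1) as [l1 [P1 F1]].
inversion F1 as [|a0 a1 M1 M2 Ea FM]; subst.
apply IH with (K ++ M1).
- exists a0, K, M1; split; auto; split; auto.
  intros k Hk; apply lt_inv with k a; auto.
- apply PermE_trans with (K ++ M).
  + apply PermE_app; [apply PermE_refl| exists M1; split; auto].
  + apply PermE_sym; auto.
Qed.

Lemma multE_acc l : (forall x, In x l -> Acc lt x) -> Acc (clos_trans _ LtE) l.
Proof. intros H; apply Acc_clos_trans, W_LtE with l; auto using mult_acc, PermE_refl. Qed.

Lemma LtE_drop l l1 l2 : PermE l (l1 ++ l2) -> l2 <> nil -> clos_trans _ LtE l1 l.
Proof.
revert l l1; induction l2 as [|k l2 IH]; intros l l1 H Hn; [congruence|].
destruct l2 as [|k' l2'].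
- apply t_step. exists k, nil, l1; split; [|split]; simpl; auto using PermE_refl.
  + eapply PermE_trans; [apply H|]. apply Perm_PermE, Permutation_sym, Permutation_cons_append.
  + contradiction.
- apply t_trans with (l1 ++ k' :: l2').
  + apply IH; [apply PermE_refl| discriminate].
  + apply t_step. exists k, nil, (l1 ++ k' :: l2'); split; [|split]; simpl; auto using PermE_refl.
    * eapply PermE_trans; [apply H|]. apply Perm_PermE, Permutation_sym, Permutation_middle.
    * contradiction.
Qed.

End Mult.

From mathcomp Require Import all_boot all_algebra.
From mathcomp Require Import zify.
From Stdlib Require Import Lia.
Set Implicit Arguments. Unset Strict Implicit. Unset Printing Implicit Defensive.
Section L.
Variable S : comPzRingType.
Notation tm := (term S).
Notation hd := (@Defs.head S).

Definition Rt (t r : tm) : Prop := redN (fun _ => True) t r.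
Definition SNR (t : tm) : Prop := Acc (fun u v => Rt v u) t.
Definition ctx' := @ctx S (fun _ => True).

Definition ac_top (a b : tm) : Prop :=
  match a, b with
  | Var n, Var m => n = m
  | Lam s, Lam s' => ac_eq s s'
  | App s u, App s' u' => ac_eq s s' /\ ac_eq u u'
  | Zero, Zero => True
  | Scal c s, Scal c' s' => c = c' /\ ac_eq s s'
  | Plus _ _, Plus _ _ => True
  | _, _ => False
  end.

Lemma ac_top_refl a : ac_top a a.
Proof. case: a => /=; intros; repeat split; apply: ac_refl. Qed.

Lemma ac_top_sym a b : ac_top a b -> ac_top b a.
Proof.
destruct a, b; simpl; intuition (subst; eauto using ac_sym).
Qed.

Lemma ac_top_trans a b c : ac_top a b -> ac_top b c -> ac_top a c.
Proof.
destruct a, b, c; simpl; intuition (subst; eauto using ac_trans).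
Qed.

Lemma ac_topP a b : ac_eq a b -> ac_top a b.
Proof.
elim=> //=; intros; try exact: ac_top_refl; try (by apply: ac_top_sym);
  try (by apply: ac_top_trans; eauto); intuition.
Qed.

Fixpoint atoms (t : tm) : list tm :=
  match t with
  | Plus a b => app (atoms a) (atoms b)
  | Scal _ a => atoms a
  | Zero => nil
  | _ => t :: nil
  end.

Fixpoint am (t : tm) : nat :=
  match t with
  | Plus a b => am a + am b + 2
  | Scal _ a => 2 * am a + 1
  | Zero => 1
  | _ => 2
  end.

Lemma am_pos t : 0 < am t.
Proof. elim: t => //= *; lia. Qed.

Lemma ac_am a b : ac_eq a b -> am a = am b.
Proof. elim=> //= *; lia. Qed.

Lemma ac_size (a b : tm) : ac_eq a b -> Defs.tsize a = Defs.tsize b.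
Proof. elim=> //= *; lia. Qed.

Definition PE := PermE (@ac_eq S).
Lemma PE_refl l : PE l l.
Proof. apply: PermE_refl; exact: ac_refl. Qed.
Lemma PE_sym l l' : PE l l' -> PE l' l.
Proof. apply: PermE_sym; exact: ac_sym. Qed.
Lemma PE_trans l l' l'' : PE l l' -> PE l' l'' -> PE l l''.
Proof. apply: PermE_trans; [exact: ac_sym| exact: ac_trans]. Qed.
Lemma PE_app l l' m m' : PE l l' -> PE m m' -> PE (app l m) (app l' m').
Proof. exact: PermE_app. Qed.
Lemma PE_perm l l' : Permutation l l' -> PE l l'.
Proof. apply: Perm_PermE; exact: ac_refl. Qed.
Lemma PE_In (P : tm -> Prop) l l' : (forall x y, ac_eq x y -> P x -> P y) ->
  PE l l' -> (forall x, In x l -> P x) -> forall y, In y l' -> P y.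
Proof. exact: PermE_In. Qed.

Lemma ac_atoms a b : ac_eq a b -> PE (atoms a) (atoms b).
Proof.
elim=> /=; clear a b.
- move=> t; exact: PE_refl.
- move=> t r _ H; exact: PE_sym.
- move=> t r u _ H1 _ H2; exact: PE_trans H1 H2.
- move=> t r u; rewrite app_assoc; exact: PE_refl.
- move=> t r; apply: PE_perm; exact: Permutation_app_comm.
- move=> t t' H _; exists [:: Lam t]; split => //; constructor; [exact: ac_lam| constructor].
- move=> t t' r r' H1 _ H2 _; exists [:: App t r]; split => //; constructor; [exact: ac_app| constructor].
- by [].
- move=> t t' r r' _ H1 _ H2; exact: PE_app.
Qed.

Lemma R_acl a a' b : ac_eq a a' -> Rt a' b -> Rt a b.
Proof. move=> H [x [y [H1 H2 H3]]]; exists x, y; split => //; exact: ac_trans H H1. Qed.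
Lemma R_acr a b b' : Rt a b -> ac_eq b b' -> Rt a b'.
Proof. move=> [x [y [H1 H2 H3]]] H; exists x, y; split => //; exact: ac_trans H3 H. Qed.
Lemma ctx_R a b : ctx' a b -> Rt a b.
Proof. move=> H; exists a, b; split => //; exact: ac_refl. Qed.

Lemma R_lam a b : Rt a b -> Rt (Lam a) (Lam b).
Proof. move=> [x [y [H1 H2 H3]]]; exists (Lam x), (Lam y); split; [exact: ac_lam|exact: c_lam|exact: ac_lam]. Qed.
Lemma R_appl a b u : Rt a b -> Rt (App a u) (App b u).
Proof. move=> [x [y [H1 H2 H3]]]; exists (App x u), (App y u); split; [apply: ac_app => //; exact: ac_refl|exact: c_appl|apply: ac_app => //; exact: ac_refl]. Qed.
Lemma R_appr a b u : Rt a b -> Rt (App u a) (App u b).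
Proof. move=> [x [y [H1 H2 H3]]]; exists (App u x), (App u y); split; [apply: ac_app => //; exact: ac_refl|exact: c_appr|apply: ac_app => //; exact: ac_refl]. Qed.
Lemma R_scal c a b : Rt a b -> Rt (Scal c a) (Scal c b).
Proof. move=> [x [y [H1 H2 H3]]]; exists (Scal c x), (Scal c y); split; [exact: ac_scal|exact: c_scal|exact: ac_scal]. Qed.
Lemma R_plusl a b u : Rt a b -> Rt (Plus a u) (Plus b u).
Proof. move=> [x [y [H1 H2 H3]]]; exists (Plus x u), (Plus y u); split; [apply: ac_plus => //; exact: ac_refl|exact: c_plusl|apply: ac_plus => //; exact: ac_refl]. Qed.
Lemma R_plusr a b u : Rt a b -> Rt (Plus u a) (Plus u b).
Proof. move=> [x [y [H1 H2 H3]]]; exists (Plus u x), (Plus u y); split; [apply: ac_plus => //; exact: ac_refl|exact: c_plusr|apply: ac_plus => //; exact: ac_refl]. Qed.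
Lemma R_head a b : Defs.head (fun _ => True) a b -> Rt a b.
Proof. move=> H; apply: ctx_R; exact: c_head. Qed.

Lemma R_var n w : ~ Rt (Var S n) w.
Proof.
move=> [x [y [H1 H2 H3]]]; move: (ac_topP H1); case: x H1 H2 => //= m _ H2 Hm; subst m.
inversion H2; subst. inversion H.
Qed.

Lemma R_zero w : ~ Rt (Zero S) w.
Proof.
move=> [x [y [H1 H2 H3]]]; move: (ac_topP H1); case: x H1 H2 => //= _ H2 _.
inversion H2; subst. inversion H.
Qed.

Lemma R_lam_inv s w : Rt (Lam s) w -> exists s2, Rt s s2 /\ ac_eq (Lam s2) w.
Proof.
move=> [x [y [H1 H2 H3]]]; move: (ac_topP H1); case: x H1 H2 => //= s1 H1 H2 Hs.
inversion H2; subst.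
- inversion H.
- exists t'; split => //. exists s1, t'; split => //; exact: ac_refl.
Qed.


Ltac acs := repeat first [assumption | apply: ac_refl | apply: ac_plus | apply: ac_app | apply: ac_scal | apply: ac_lam].

Lemma R_app_inv t u w : Rt (App t u) w ->
  (exists t', Rt t t' /\ ac_eq (App t' u) w) \/
  (exists u', Rt u u' /\ ac_eq (App t u') w) \/
  (exists t1 t2, ac_eq t (Plus t1 t2) /\ ac_eq (Plus (App t1 u) (App t2 u)) w) \/
  (exists u1 u2, ac_eq u (Plus u1 u2) /\ ac_eq (Plus (App t u1) (App t u2)) w) \/
  (exists c t0, ac_eq t (Scal c t0) /\ ac_eq (Scal c (App t0 u)) w) \/
  (exists c u0, ac_eq u (Scal c u0) /\ ac_eq (Scal c (App t u0)) w) \/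
  (ac_eq t (Zero S) /\ ac_eq (Zero S) w) \/
  (ac_eq u (Zero S) /\ ac_eq (Zero S) w) \/
  (exists s v, ac_eq t (Lam s) /\ ac_eq u v /\ basis v /\ ac_eq (subst 0 v s) w).
Proof.
move=> [x [y [H1 H2 H3]]]; move: (ac_topP H1); case: x H1 H2 => //= t1 u1 _ H2 [Ht Hu].
have Hu' := ac_sym Hu.
inversion H2; subst.
- inversion H; subst;
  first [ do 2 right; left; do 2 eexists; split; [eassumption|apply: ac_trans H3; acs]
        | do 3 right; left; do 2 eexists; split; [eassumption|apply: ac_trans H3; acs]
        | do 4 right; left; do 2 eexists; split; [eassumption|apply: ac_trans H3; acs]
        | do 5 right; left; do 2 eexists; split; [eassumption|apply: ac_trans H3; acs]
        | do 6 right; left; split; assumption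
        | do 7 right; left; split; assumption
        | do 8 right; do 2 eexists; split; [eassumption|split; [eassumption|split; assumption]] ].
- left; exists t'; split; [exists t1, t'; split => //; exact: ac_refl| apply: ac_trans H3; acs].
- right; left; exists r'; split; [exists u1, r'; split => //; exact: ac_refl| apply: ac_trans H3; acs].
Qed.

Lemma ctx_split x y : ctx' x y ->
  (am y < am x /\ exists l1 l2, Permutation (atoms x) (app l1 l2) /\ Permutation (atoms y) l1) \/
  (exists a M w, Permutation (atoms x) (a :: M) /\ Rt a w /\ Permutation (atoms y) (app (atoms w) M)).
Proof.
elim=> {x y}.
- move=> x y H.
  case: H => [t|t|t|a|a b t|a t r|a b t _|a t _|t _|t r u _|u t r _|a t r _|r a t _|t|t|t b Hb].
  + left; split; [simpl; lia| exists (atoms t), nil; simpl; rewrite app_nil_r; split; apply: Permutation_refl].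
  + left; split; [have := am_pos t; simpl; lia| exists nil, (atoms t); split; apply: Permutation_refl].
  + left; split; [have := am_pos t; simpl; lia| exists (atoms t), nil; simpl; rewrite app_nil_r; split; apply: Permutation_refl].
  + left; split; [simpl; lia| exists nil, nil; split; apply: Permutation_refl].
  + left; split; [have := am_pos t; simpl; lia| exists (atoms t), nil; simpl; rewrite app_nil_r; split; apply: Permutation_refl].
  + left; split; [simpl; lia| exists (app (atoms t) (atoms r)), nil; simpl; rewrite app_nil_r; split; apply: Permutation_refl].
  + left; split; [have := am_pos t; simpl; lia| exists (atoms t), (atoms t); split; apply: Permutation_refl].
  + left; split; [have := am_pos t; simpl; lia| exists (atoms t), (atoms t); split; apply: Permutation_refl].
  + left; split; [have := am_pos t; simpl; lia| exists (atoms t), (atoms t); split; apply: Permutation_refl].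
  + right; do 3 eexists; split; [apply: Permutation_refl| split; [apply: R_head; econstructor; first [exact I|exact Hb]| rewrite app_nil_r; apply: Permutation_refl]].
  + right; do 3 eexists; split; [apply: Permutation_refl| split; [apply: R_head; econstructor; first [exact I|exact Hb]| rewrite app_nil_r; apply: Permutation_refl]].
  + right; do 3 eexists; split; [apply: Permutation_refl| split; [apply: R_head; econstructor; first [exact I|exact Hb]| rewrite app_nil_r; apply: Permutation_refl]].
  + right; do 3 eexists; split; [apply: Permutation_refl| split; [apply: R_head; econstructor; first [exact I|exact Hb]| rewrite app_nil_r; apply: Permutation_refl]].
  + right; do 3 eexists; split; [apply: Permutation_refl| split; [apply: R_head; econstructor; first [exact I|exact Hb]| rewrite app_nil_r; apply: Permutation_refl]].
  + right; do 3 eexists; split; [apply: Permutation_refl| split; [apply: R_head; econstructor; first [exact I|exact Hb]| rewrite app_nil_r; apply: Permutation_refl]].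
  + right; do 3 eexists; split; [apply: Permutation_refl| split; [apply: R_head; econstructor; first [exact I|exact Hb]| rewrite app_nil_r; apply: Permutation_refl]].
- move=> t t' H _; right; exists (Lam t), nil, (Lam t'); split; [apply: Permutation_refl|split; [|apply: Permutation_refl]].
  by apply: ctx_R; apply: c_lam.
- move=> t t' r H _; right; exists (App t r), nil, (App t' r); split; [apply: Permutation_refl|split; [|apply: Permutation_refl]].
  by apply: ctx_R; apply: c_appl.
- move=> t r r' H _; right; exists (App t r), nil, (App t r'); split; [apply: Permutation_refl|split; [|apply: Permutation_refl]].
  by apply: ctx_R; apply: c_appr.
- move=> a t t' _ [[Ham H]|H]; [left; split; [simpl; lia| exact H] | right; exact H].
- move=> t t' r _ [[Ham [l1 [l2 [P1 P2]]]]|[a [M [w [P1 [HR P2]]]]]].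
  + left; split; [simpl; lia|]. exists (app l1 (atoms r)), l2; split; simpl.
    * apply: Permutation_trans; [apply: Permutation_app_tail; exact P1|].
      rewrite -!app_assoc; apply: Permutation_app_head; apply: Permutation_app_comm.
    * by apply: Permutation_app_tail.
  + right; exists a, (app M (atoms r)), w; split; [|split => //]; simpl.
    * by apply: (Permutation_app_tail _ P1).
    * rewrite app_assoc; by apply: Permutation_app_tail.
- move=> t r r' _ [[Ham [l1 [l2 [P1 P2]]]]|[a [M [w [P1 [HR P2]]]]]].
  + left; split; [simpl; lia|]. exists (app (atoms t) l1), l2; split; simpl.
    * rewrite -app_assoc; by apply: Permutation_app_head.
    * by apply: Permutation_app_head.
  + right; exists a, (app (atoms t) M), w; split; [|split => //]; simpl.
    * apply: Permutation_trans; [apply: Permutation_app_head; exact P1|].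
      apply: Permutation_sym; apply: Permutation_middle.
    * apply: Permutation_trans; [apply: Permutation_app_head; exact P2|].
      apply: Permutation_app_swap_app.
Qed.


Definition Sub (a b : tm) : Prop :=
  match a with
  | Lam s => b = s
  | App s u => b = s \/ b = u
  | Scal _ s => b = s
  | Plus s r => b = s \/ b = r
  | _ => False
  end.
Definition osub (b a : tm) := exists a' b', [/\ ac_eq a a', Sub a' b' & ac_eq b' b].
Definition ord (b a : tm) := Rt a b \/ osub b a.
Definition lt := clos_trans _ ord.

Lemma Sub_size a b : Sub a b -> (Defs.tsize b < Defs.tsize a)%N.
Proof. case: a => //= *; intuition (subst; lia). Qed.

Lemma osub_size a b : osub b a -> (Defs.tsize b < Defs.tsize a)%N.
Proof.
move=> [a' [b' [H1 H2 H3]]]; rewrite (ac_size H1) -(ac_size H3); exact: Sub_size.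
Qed.

Lemma osub_R c a b : osub c a -> Rt c b -> exists a2, Rt a a2 /\ osub b a2.
Proof.
move=> [a' [c' [H1 H2 H3]]] HR; have HR' := R_acl H3 HR.
have Hs : forall x, Sub x b -> osub b x.
  by move=> x Hx; exists x, b; split => //; exact: ac_refl.
case: a' H1 H2 => //=.
- move=> s H1 Hc; subst c'; exists (Lam b); split; [apply: (R_acl H1); exact: R_lam| exact: Hs].
- move=> s u H1 [Hc|Hc]; subst c'.
  + exists (App b u); split; [apply: (R_acl H1); exact: R_appl| apply: Hs; simpl; tauto].
  + exists (App s b); split; [apply: (R_acl H1); exact: R_appr| apply: Hs; simpl; tauto].
- move=> k s H1 Hc; subst c'; exists (Scal k b); split; [apply: (R_acl H1); exact: R_scal| exact: Hs].
- move=> s u H1 [Hc|Hc]; subst c'.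
  + exists (Plus b u); split; [apply: (R_acl H1); exact: R_plusl| apply: Hs; simpl; tauto].
  + exists (Plus s b); split; [apply: (R_acl H1); exact: R_plusr| apply: Hs; simpl; tauto].
Qed.

Inductive below : tm -> tm -> Prop :=
| bl_refl a : below a a
| bl_step c b a : osub b a -> below c b -> below c a.

Lemma below_R c a b : below c a -> Rt c b -> exists a2, Rt a a2 /\ below b a2.
Proof.
elim=> {c a}.
- move=> a H; exists b; split => //; exact: bl_refl.
- move=> c b0 a Hs _ IH HR; case: (IH HR) => a3 [H1 H2].
  case: (osub_R Hs H1) => a2 [H3 H4]; exists a2; split => //; exact: bl_step H4 H2.
Qed.

Lemma below_osub c a b : below c a -> osub b c -> below b a.
Proof.
elim=> {c a}.
- move=> a H; apply: bl_step H _; exact: bl_refl.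
- move=> c b0 a Hs _ IH H; apply: bl_step Hs _; exact: IH.
Qed.

Lemma SN_below a : SNR a -> forall c, below c a -> Acc ord c.
Proof.
elim=> {a} a _ IHa.
suff: forall n c, (Defs.tsize c < n)%N -> below c a -> Acc ord c.
  by move=> H c Hc; exact: (H _ c (ltnSn _) Hc).
elim=> [|n IHn] c Hn Hb; first by rewrite ltn0 in Hn.
constructor => b [HR|Hs].
- case: (below_R Hb HR) => a2 [H1 H2]; exact: IHa H1 _ H2.
- apply: IHn; [have := osub_size Hs; lia| exact: below_osub Hb Hs].
Qed.

Lemma SN_ord a : SNR a -> Acc ord a.
Proof. move=> H; apply: SN_below H _ (bl_refl a). Qed.

Lemma SN_lt a : SNR a -> Acc lt a.
Proof. move=> H; apply: Acc_clos_trans; exact: SN_ord. Qed.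

Lemma ord_ac x x' a a' : ac_eq x x' -> ac_eq a a' -> ord x a -> ord x' a'.
Proof.
move=> Hx Ha [HR|[a1 [b1 [H1 H2 H3]]]].
- left; apply: R_acl (ac_sym Ha) _; exact: R_acr HR Hx.
- right; exists a1, b1; split => //; [exact: ac_trans (ac_sym Ha) H1| exact: ac_trans H3 Hx].
Qed.

Lemma lt_ac x x' a a' : ac_eq x x' -> ac_eq a a' -> lt x a -> lt x' a'.
Proof.
move=> Hx Ha H; elim: H x' a' Hx Ha => {x a}.
- move=> x a H x' a' Hx Ha; apply: t_step; exact: ord_ac H.
- move=> x y z _ IH1 _ IH2 x' z' Hx Hz; eapply t_trans; [exact: (IH1 x' y Hx (ac_refl _))| exact: (IH2 y z' (ac_refl _) Hz)].
Qed.

Lemma below_lt x w : below x w -> x = w \/ lt x w.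
Proof.
elim=> {x w}; first by left.
move=> c b a Hs _ [->|H]; right; [apply: t_step; by right| eapply t_trans; [exact H| apply: t_step; by right]].
Qed.

Lemma atoms_below x w : In x (atoms w) -> below x w.
Proof.
elim: w => [n|s _|s _ u _||k s IH|s IHs u IHu] /=; try (by move=> [<-|[]]; exact: bl_refl).
- by [].
- move=> H; apply: (bl_step _ (IH H)); exists (Scal k s), s; split => //; exact: ac_refl.
- move=> H; case: (in_app_or _ _ _ H) => Hx.
  + apply: (bl_step _ (IHs Hx)); exists (Plus s u), s; split; [exact: ac_refl| simpl; tauto| exact: ac_refl].
  + apply: (bl_step _ (IHu Hx)); exists (Plus s u), u; split; [exact: ac_refl| simpl; tauto| exact: ac_refl].
Qed.

Lemma atoms_lt a w x : Rt a w -> In x (atoms w) -> lt x a.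
Proof.
move=> HR /atoms_below /below_lt [->|H]; first by apply: t_step; left.
eapply t_trans; [exact H| apply: t_step; by left].
Qed.

Lemma SN_map (f : tm -> tm) : (forall a b, Rt a b -> Rt (f a) (f b)) -> forall t, SNR (f t) -> SNR t.
Proof.
move=> Hf t H.
suff: forall u, SNR u -> forall t, u = f t -> SNR t by move=> /(_ _ H t erefl).
move=> u; elim=> {u} u _ IH t' Hu; subst u; constructor => t'' Ht''; exact: (IH _ (Hf _ _ Ht'') _ erefl).
Qed.

Lemma SN_ac t t' : SNR t -> ac_eq t t' -> SNR t'.
Proof. move=> H Hac; constructor => w Hw; apply: (Acc_inv H); exact: R_acl Hac Hw. Qed.

Lemma SN_red t t' : SNR t -> Rt t t' -> SNR t'.
Proof. move=> H HR; exact: (Acc_inv H). Qed.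

Lemma SN_atoms t : SNR t -> forall x, In x (atoms t) -> SNR x.
Proof.
elim: t => [n|s _|s _ u _||k s IH|s IHs u IHu] /=; try (by move=> H x [<-|[]]).
- by [].
- move=> H; apply: IH; exact: (@SN_map (fun x => Scal k x) (fun a b => @R_scal k a b) s H).
- move=> H x Hx; case: (in_app_or _ _ _ Hx) => {}Hx.
  + apply: (IHs _ _ Hx); exact: (@SN_map (fun x => Plus x u) (fun a b => @R_plusl a b u) s H).
  + apply: (IHu _ _ Hx); exact: (@SN_map (fun x => Plus s x) (fun a b => @R_plusr a b s) u H).
Qed.

Definition LtT := LtE (@ac_eq S) lt.

Lemma alg_SN_aux l : Acc (clos_trans _ LtT) l -> forall n t, PE (atoms t) l -> (am t <= n)%N -> SNR t.
Proof.
elim=> {l} l _ IHl n; elim: n => [|n IHn] t Hl Hn.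
  by have := am_pos t; lia.
constructor => t' [x [y [H1 H2 H3]]].
have Ea := ac_am H1; have Eb := ac_am H3.
case: (ctx_split H2) => [[Ham [l1 [l2 [P1 P2]]]]|[a [M [w [P1 [HR P2]]]]]].
- have E1 : PE l (app l1 l2) := PE_trans (PE_sym Hl) (PE_trans (ac_atoms H1) (PE_perm P1)).
  have E2 : PE (atoms t') l1 := PE_trans (PE_sym (ac_atoms H3)) (PE_perm P2).
  clear P1; case: l2 E1 => [|k l2] E1.
  + rewrite app_nil_r in E1; apply: IHn; [exact: PE_trans E2 (PE_sym E1)| lia].
  + apply: (IHl l1 _ (am t') t' E2 (leqnn _)).
    exact: (LtE_drop (@ac_refl S) (@ac_sym S) (@ac_trans S) lt l1 E1 (@nil_cons _ k l2 \o esym)).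
- apply: (IHl (atoms t') _ (am t') t' (PE_refl _) (leqnn _)).
  apply: t_step; exists a, (atoms w), M; split; [|split].
  + exact: PE_trans (PE_sym Hl) (PE_trans (ac_atoms H1) (PE_perm P1)).
  + exact: PE_trans (PE_sym (ac_atoms H3)) (PE_perm P2).
  + move=> k Hk; exact: atoms_lt HR Hk.
Qed.

Lemma alg_SN t : (forall x, In x (atoms t) -> SNR x) -> SNR t.
Proof.
move=> H; apply: (alg_SN_aux _ (PE_refl _) (leqnn (am t))).
apply: (multE_acc (@ac_eq S) (@ac_refl S) (@ac_sym S) (@ac_trans S) lt_ac) => x Hx.
apply: SN_lt; exact: H.
Qed.


Definition upr (xi : nat -> nat) (n : nat) : nat :=
  match n with 0 => 0 | k.+1 => (xi k).+1 end.

Fixpoint ren (xi : nat -> nat) (t : tm) : tm :=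
  match t with
  | Var n => Var S (xi n)
  | Lam a => Lam (ren (upr xi) a)
  | App a b => App (ren xi a) (ren xi b)
  | Zero => Zero S
  | Scal c a => Scal c (ren xi a)
  | Plus a b => Plus (ren xi a) (ren xi b)
  end.

Definition ups (sg : nat -> tm) (n : nat) : tm :=
  match n with 0 => Var S 0 | k.+1 => ren (fun i => i.+1) (sg k) end.

Fixpoint psub (sg : nat -> tm) (t : tm) : tm :=
  match t with
  | Var n => sg n
  | Lam a => Lam (psub (ups sg) a)
  | App a b => App (psub sg a) (psub sg b)
  | Zero => Zero S
  | Scal c a => Scal c (psub sg a)
  | Plus a b => Plus (psub sg a) (psub sg b)
  end.

Lemma ren_ext t : forall xi zeta, (forall n, xi n = zeta n) -> ren xi t = ren zeta t.
Proof.
elim: t => [n|a IH|a IHa b IHb||c a IH|a IHa b IHb] xi zeta H /=.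
- by rewrite H.
- rewrite (IH _ (upr zeta)) // => -[|k] //=; by rewrite H.
- by rewrite (IHa _ _ H) (IHb _ _ H).
- by [].
- by rewrite (IH _ _ H).
- by rewrite (IHa _ _ H) (IHb _ _ H).
Qed.

Lemma psub_ext t : forall sg tau, (forall n, sg n = tau n) -> psub sg t = psub tau t.
Proof.
elim: t => [n|a IH|a IHa b IHb||c a IH|a IHa b IHb] sg tau H /=.
- by rewrite H.
- rewrite (IH _ (ups tau)) // => -[|k] //=; by rewrite H.
- by rewrite (IHa _ _ H) (IHb _ _ H).
- by [].
- by rewrite (IH _ _ H).
- by rewrite (IHa _ _ H) (IHb _ _ H).
Qed.

Lemma ren_ren t : forall xi zeta, ren xi (ren zeta t) = ren (fun n => xi (zeta n)) t.
Proof.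
elim: t => [n|a IH|a IHa b IHb||c a IH|a IHa b IHb] xi zeta /=; try rewrite IHa; try rewrite IHb; try rewrite IH; try done.
congr Lam; apply: ren_ext => -[|k] //.
Qed.

Lemma psub_ren t : forall sg xi, psub sg (ren xi t) = psub (fun n => sg (xi n)) t.
Proof.
elim: t => [n|a IH|a IHa b IHb||c a IH|a IHa b IHb] sg xi /=; try rewrite IHa; try rewrite IHb; try rewrite IH; try done.
congr Lam; apply: psub_ext => -[|k] //.
Qed.

Lemma ren_psub t : forall sg xi, ren xi (psub sg t) = psub (fun n => ren xi (sg n)) t.
Proof.
elim: t => [n|a IH|a IHa b IHb||c a IH|a IHa b IHb] sg xi /=; try rewrite IHa; try rewrite IHb; try rewrite IH; try done.
congr Lam; apply: psub_ext => -[|k] //=.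
rewrite !ren_ren; exact: ren_ext.
Qed.

Lemma psub_psub t : forall sg tau, psub sg (psub tau t) = psub (fun n => psub sg (tau n)) t.
Proof.
elim: t => [n|a IH|a IHa b IHb||c a IH|a IHa b IHb] sg tau /=; try rewrite IHa; try rewrite IHb; try rewrite IH; try done.
congr Lam; apply: psub_ext => -[|k] //=.
by rewrite psub_ren ren_psub.
Qed.

Lemma ren_as_psub t : forall xi, ren xi t = psub (fun n => Var S (xi n)) t.
Proof.
elim: t => [n|a IH|a IHa b IHb||c a IH|a IHa b IHb] xi /=; try rewrite IHa; try rewrite IHb; try rewrite IH; try done.
congr Lam; apply: psub_ext => -[|k] //.
Qed.

Lemma psub_id t : psub (Var S) t = t.
Proof.
elim: t => [n|a IH|a IHa b IHb||c a IH|a IHa b IHb] /=; try rewrite IHa; try rewrite IHb; try (rewrite IH; done); try done.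
rewrite -{2}IH; congr Lam; apply: psub_ext => -[|k] //.
Qed.

Lemma lift_ren t : forall d c, Defs.lift d c t = ren (fun n => if (n < c)%N then n else n + d) t.
Proof.
elim: t => [n|a IH|a IHa b IHb||c0 a IH|a IHa b IHb] d c /=; try rewrite IHa; try rewrite IHb; try rewrite IH; try done.
- by case: ifP.
- congr Lam; apply: ren_ext => -[|k] //=.
  by rewrite ltnS; case: ifP.
Qed.

Lemma lift00 (u : tm) : Defs.lift 0 0 u = u.
Proof. rewrite lift_ren ren_as_psub -{2}(psub_id u); apply: psub_ext => n /=; by rewrite addn0. Qed.

Definition sfun (n : nat) (u : tm) (m : nat) : tm :=
  if (m < n)%N then Var S m else if m == n then Defs.lift n 0 u else Var S m.-1.

Lemma subst_psub t : forall n u, subst n u t = psub (sfun n u) t.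
Proof.
elim: t => [m|a IH|a IHa b IHb||c a IH|a IHa b IHb] n u /=; try rewrite IHa; try rewrite IHb; try rewrite IH; try done.
congr Lam; apply: psub_ext => -[|k] //=.
rewrite /sfun ltnS eqSS.
case: (ltngtP k n) => Hk //=.
- by case: k Hk => //= k _.
- subst k; rewrite !lift_ren ren_ren; apply: ren_ext => i /=; lia.
Qed.

Definition scons (b : tm) (sg : nat -> tm) (n : nat) : tm :=
  match n with 0 => b | k.+1 => sg k end.

Lemma subst_ups b sg s : subst 0 b (psub (ups sg) s) = psub (scons b sg) s.
Proof.
rewrite subst_psub psub_psub; apply: psub_ext => -[|k] /=.
- by rewrite /sfun /= lift00.
- rewrite psub_ren -{2}(psub_id (sg k)); apply: psub_ext => i //.
Qed.

Lemma subst_beta n (b v t : tm) :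
  subst n b (subst 0 v t) = subst 0 (subst n b v) (subst n.+1 b t).
Proof.
rewrite !subst_psub !psub_psub; apply: psub_ext => -[|j] /=.
- by rewrite /sfun /= !lift00.
- rewrite /sfun /= ltnS eqSS.
  case: (ltngtP j n) => Hj //=.
  + by case: j Hj.
  + subst j; rewrite !lift_ren psub_ren ren_as_psub; apply: psub_ext => i /=.
    by rewrite addnS.
Qed.

Lemma basis_lift d c (b : tm) : basis b -> basis (Defs.lift d c b).
Proof. by case: b => //= n _; case: ifP. Qed.

Lemma basis_subst n (b v : tm) : basis b -> basis v -> basis (subst n b v).
Proof.
move=> Hb; case: v => //= m _; case: ifP => // _; case: ifP => // _; exact: basis_lift.
Qed.

Lemma ac_lift (u u' : tm) : ac_eq u u' -> forall d c, ac_eq (Defs.lift d c u) (Defs.lift d c u').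
Proof.
elim=> {u u'} /=; intros; try (by constructor; auto); eauto using ac_sym, ac_trans, ac_refl.
Qed.

Lemma ac_subst_l t t' : ac_eq t t' -> forall n (u : tm), ac_eq (subst n u t) (subst n u t').
Proof.
elim=> {t t'} /=; intros; try (by constructor; auto); eauto using ac_sym, ac_trans, ac_refl.
Qed.

Lemma ac_subst_r (t : tm) : forall n (u u' : tm), ac_eq u u' -> ac_eq (subst n u t) (subst n u' t).
Proof.
elim: t => [m|a IH|a IHa b IHb||c a IH|a IHa b IHb] n u u' H /=; try (by constructor; auto).
case: ifP => _; [exact: ac_refl|]; case: ifP => _; [exact: ac_lift|exact: ac_refl].
Qed.

Lemma ac_subst n (u u' t t' : tm) : ac_eq u u' -> ac_eq t t' -> ac_eq (subst n u t) (subst n u' t').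
Proof. move=> H1 H2; apply: ac_trans (ac_subst_l H2 n u) (ac_subst_r _ _ H1). Qed.

Lemma ctx_subst (b a a' : tm) : basis b -> ctx' a a' -> forall n, ctx' (subst n b a) (subst n b a').
Proof.
move=> Hb; elim=> {a a'} /=.
- move=> a a' H n; apply: c_head.
  case: H => /=; intros; try (by constructor).
  rewrite subst_beta; constructor; exact: basis_subst.
- move=> t t' _ IH n; exact: (c_lam (IH n.+1)).
- move=> t t' r _ IH n; exact: (c_appl _ (IH n)).
- move=> t r r' _ IH n; exact: (c_appr _ (IH n)).
- move=> c t t' _ IH n; exact: (c_scal _ (IH n)).
- move=> t t' r _ IH n; exact: (c_plusl _ (IH n)).
- move=> t r r' _ IH n; exact: (c_plusr _ (IH n)).
Qed.

Lemma R_subst (b a a' : tm) n : basis b -> Rt a a' -> Rt (subst n b a) (subst n b a').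
Proof.
move=> Hb [x [y [H1 H2 H3]]]; exists (subst n b x), (subst n b y); split.
- exact: ac_subst_l.
- exact: ctx_subst.
- exact: ac_subst_l.
Qed.


Definition neutral (t : tm) : Prop := match t with Var _ | App _ _ => True | _ => False end.

Record cand (X : tm -> Prop) : Prop := Cand {
  c1 : forall t, X t -> SNR t;
  c2 : forall t t', X t -> Rt t t' -> X t';
  c3 : forall t, neutral t -> (forall t', Rt t t' -> X t') -> X t;
  c4 : X (Zero S);
  c5 : forall t r, X (Plus t r) <-> X t /\ X r;
  c6 : forall c t, X (Scal c t) <-> X t;
  c7 : forall t t', ac_eq t t' -> X t -> X t' }.

Lemma cand_var X n : cand X -> X (Var S n).
Proof. move=> HX; apply: (c3 HX) => // t' Ht'; case: (R_var Ht'). Qed.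

Lemma neutral_ac (t x : tm) : neutral t -> ac_eq t x -> neutral x.
Proof. move=> Hn /ac_topP; by case: t Hn; case: x. Qed.

Lemma lam_ac (s x : tm) : ac_eq (Lam s) x -> exists s', x = Lam s' /\ ac_eq s s'.
Proof. move/ac_topP; case: x => //= s' H; by exists s'. Qed.

Lemma basis_ac (u v : tm) : ac_eq u v -> basis v -> basis u.
Proof. move/ac_topP; by case: u; case: v. Qed.

Lemma SN_cand : cand SNR.
Proof.
constructor.
- by [].
- move=> t t' H HR; exact: (SN_red H HR).
- move=> t _ H; constructor => t' Ht'; exact: H.
- by apply: alg_SN.
- move=> t r; split.
  + move=> H; split; [exact: (@SN_map (fun x => Plus x r) (fun a b => @R_plusl a b r) t H)
                     |exact: (@SN_map (fun x => Plus t x) (fun a b => @R_plusr a b t) r H)].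
  + move=> [Ht Hr]; apply: alg_SN => x /= Hx; case: (in_app_or _ _ _ Hx) => Hx'.
    * exact: (SN_atoms Ht Hx').
    * exact: (SN_atoms Hr Hx').
- move=> c t; split.
  + move=> H; exact: (@SN_map (fun x => Scal c x) (fun a b => @R_scal c a b) t H).
  + move=> Ht; apply: alg_SN => x /= Hx; exact: (SN_atoms Ht Hx).
- move=> t t' H Ht; exact: (SN_ac Ht H).
Qed.

Lemma cand_atoms X t : cand X -> X t -> forall a, In a (atoms t) -> X a.
Proof.
move=> HX; elim: t => [n|s _|s _ u _||c s IH|s IHs u IHu] /=; try (by move=> H a [<-|[]]).
- by [].
- move=> /(c6 HX) H; exact: IH.
- move=> /(c5 HX) [H1 H2] a Ha; case: (in_app_or _ _ _ Ha) => Ha'; [exact: IHs| exact: IHu].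
Qed.

Lemma cand_of_atoms X t : cand X -> (forall a, In a (atoms t) -> X a) -> X t.
Proof.
move=> HX; elim: t => [n|s _|s _ u _||c s IH|s IHs u IHu] /=; try (by move=> H; apply: H; left).
- move=> _; exact: (c4 HX).
- move=> H; apply/(c6 HX); exact: IH.
- move=> H; apply/(c5 HX); split; [apply: IHs| apply: IHu] => a Ha; apply: H; apply: in_or_app; tauto.
Qed.

Lemma R_atoms (P : tm -> Prop) t t' : (forall x y, ac_eq x y -> P x -> P y) ->
  (forall a w, P a -> Rt a w -> forall b, In b (atoms w) -> P b) ->
  Rt t t' -> (forall a, In a (atoms t) -> P a) -> forall b, In b (atoms t') -> P b.
Proof.
move=> HPac HPR [x [y [H1 H2 H3]]] Ht.
have Hx := PE_In HPac (ac_atoms H1) Ht.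
apply: (PE_In HPac (ac_atoms H3)).
case: (ctx_split H2) => [[_ [l1 [l2 [P1 P2]]]]|[a [M [w [P1 [HR P2]]]]]].
- move=> b Hb; apply: Hx; apply: (Permutation_in _ (Permutation_sym P1)); apply: in_or_app; left.
  exact: (Permutation_in _ P2).
- have Ha : P a by apply: Hx; apply: (Permutation_in _ (Permutation_sym P1)); left.
  move=> b Hb; case: (in_app_or _ _ _ (Permutation_in _ P2 Hb)) => Hb'.
  + exact: (HPR _ _ Ha HR _ Hb').
  + apply: Hx; apply: (Permutation_in _ (Permutation_sym P1)); by right.
Qed.

Lemma ord_R a b : Rt a b -> ord b a.
Proof. by left. Qed.

Lemma ord_plusl (a a1 a2 : tm) : ac_eq a (Plus a1 a2) -> ord a1 a.
Proof. move=> H; right; exists (Plus a1 a2), a1; split => //; [simpl; tauto| exact: ac_refl]. Qed.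
Lemma ord_plusr (a a1 a2 : tm) : ac_eq a (Plus a1 a2) -> ord a2 a.
Proof. move=> H; right; exists (Plus a1 a2), a2; split => //; [simpl; tauto| exact: ac_refl]. Qed.
Lemma ord_scal (a : tm) c (a1 : tm) : ac_eq a (Scal c a1) -> ord a1 a.
Proof. move=> H; right; exists (Scal c a1), a1; split => //; exact: ac_refl. Qed.

Lemma cand_plus_l X t1 t2 t : cand X -> ac_eq t (Plus t1 t2) -> X t -> X t1.
Proof. move=> HX Hac Ht; exact: (proj1 (proj1 (c5 HX _ _) (c7 HX Hac Ht))). Qed.
Lemma cand_plus_r X t1 t2 t : cand X -> ac_eq t (Plus t1 t2) -> X t -> X t2.
Proof. move=> HX Hac Ht; exact: (proj2 (proj1 (c5 HX _ _) (c7 HX Hac Ht))). Qed.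
Lemma cand_scal X c t1 t : cand X -> ac_eq t (Scal c t1) -> X t -> X t1.
Proof. move=> HX Hac Ht; exact: (proj1 (c6 HX _ _) (c7 HX Hac Ht)). Qed.

Lemma lam_or (t : tm) : (exists s, t = Lam s) \/ (forall s, ~ ac_eq t (Lam s)).
Proof.
case: t => [n|s|a b||c a|a b]; try (by right => s' /ac_topP).
left; by exists s.
Qed.

Definition arr (X Y : tm -> Prop) (t : tm) : Prop := forall u, X u -> Y (App t u).

Section Arr.
Variables X Y : tm -> Prop.
Hypothesis HX : cand X.
Hypothesis HY : cand Y.

Lemma arr_ac t t' : ac_eq t t' -> arr X Y t -> arr X Y t'.
Proof. move=> H Ht u Xu; apply: (c7 HY _ (Ht u Xu)); apply: ac_app => //; exact: ac_refl. Qed.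

Lemma arr_R t t' : Rt t t' -> arr X Y t -> arr X Y t'.
Proof. move=> H Ht u Xu; apply: (c2 HY (Ht u Xu)); exact: R_appl. Qed.

Lemma arr_SN t : arr X Y t -> SNR t.
Proof.
move=> H; have := c1 HY (H _ (cand_var 0 HX)).
exact: (@SN_map (fun x => App x (Var S 0)) (fun a b => @R_appl a b (Var S 0)) t).
Qed.

Lemma arr_plus t r : arr X Y (Plus t r) -> arr X Y t /\ arr X Y r.
Proof.
move=> H; have H' : forall u, X u -> Y (Plus (App t u) (App r u)).
  move=> u Xu; apply: (c2 HY (H u Xu)); apply: R_head; by constructor.
split => u Xu; have := proj1 (c5 HY _ _) (H' u Xu); tauto.
Qed.

Lemma arr_scal c t : arr X Y (Scal c t) -> arr X Y t.
Proof.
move=> H u Xu; apply/(c6 HY c); apply: (c2 HY (H u Xu)); apply: R_head; by constructor.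
Qed.

Lemma arr_atoms t : arr X Y t -> forall a, In a (atoms t) -> arr X Y a.
Proof.
elim: t => [n|s _|s _ u _||c s IH|s IHs u IHu] /=; try (by move=> H a [<-|[]]).
- by [].
- move=> /arr_scal H; exact: IH.
- move=> /arr_plus [H1 H2] a Ha; case: (in_app_or _ _ _ Ha) => Ha'; [exact: IHs| exact: IHu].
Qed.

Lemma arr_neutral t : neutral t -> (forall t', Rt t t' -> arr X Y t') -> arr X Y t.
Proof.
move=> Hn Ht u Xu; have Hacc := SN_ord (c1 HX Xu); move: Xu; elim: Hacc => {u} u _ IHu Xu.
apply: (c3 HY) => // w Hw.
case: (R_app_inv Hw) =>
  [[t' [H1 H2]]|[[u' [H1 H2]]|[[t1 [t2 [H1 H2]]]|[[u1 [u2 [H1 H2]]]|[[c [t0 [H1 H2]]]|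
   [[c [u0 [H1 H2]]]|[[H1 H2]|[[H1 H2]|[s [v [H1 [H2 [Hv H3]]]]]]]]]]]]].
- apply: (c7 HY H2); exact: Ht.
- apply: (c7 HY H2); apply: IHu; [exact: ord_R| exact: (c2 HX Xu H1)].
- by have := neutral_ac Hn H1.
- apply: (c7 HY H2); apply/(c5 HY); split; apply: IHu;
   [exact: (ord_plusl H1)| exact: (cand_plus_l HX H1 Xu)| exact: (ord_plusr H1)| exact: (cand_plus_r HX H1 Xu)].
- by have := neutral_ac Hn H1.
- apply: (c7 HY H2); apply/(c6 HY); apply: IHu; [exact: (ord_scal H1)| exact: (cand_scal HX H1 Xu)].
- by have := neutral_ac Hn H1.
- apply: (c7 HY H2); exact: (c4 HY).
- by have := neutral_ac Hn H1.
Qed.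

Lemma arr_alg_core t : Acc ord t -> (forall s, ~ ac_eq t (Lam s)) ->
  (forall a, In a (atoms t) -> arr X Y a) -> arr X Y t.
Proof.
move=> Hacc; elim: Hacc => {t} t _ IHt Hnl Hat u Xu.
have Hacc := SN_ord (c1 HX Xu); move: Xu; elim: Hacc => {u} u _ IHu Xu.
apply: (c3 HY) => // w Hw.
have Hsub : forall t1, (forall a, In a (atoms t1) -> In a (atoms t)) -> forall a, In a (atoms t1) -> arr X Y a.
  by move=> t1 Hin a Ha; apply: Hat; apply: Hin.
case: (R_app_inv Hw) =>
  [[t' [H1 H2]]|[[u' [H1 H2]]|[[t1 [t2 [H1 H2]]]|[[u1 [u2 [H1 H2]]]|[[c [t0 [H1 H2]]]|
   [[c [u0 [H1 H2]]]|[[H1 H2]|[[H1 H2]|[s [v [H1 [H2 [Hv H3]]]]]]]]]]]]].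
- apply: (c7 HY H2).
  have Hat' := R_atoms (@arr_ac) (fun a w Ha HR => arr_atoms (arr_R HR Ha)) H1 Hat.
  case: (lam_or t') => [[s Hs]|Hs]; last by apply: (IHt t' (ord_R H1) Hs Hat').
  subst t'; exact: (Hat' (Lam s) (or_introl erefl) u Xu).
- apply: (c7 HY H2); apply: IHu; [exact: ord_R| exact: (c2 HX Xu H1)].
- have Hat1 := PE_In (@arr_ac) (ac_atoms H1) Hat.
  apply: (c7 HY H2); apply/(c5 HY); split.
  + case: (lam_or t1) => [[s Hts]|Hs]; first by subst t1; exact: (Hat1 (Lam s) (or_introl erefl) u Xu).
    apply: (IHt t1 (ord_plusl H1) Hs) => // a Ha; apply: Hat1; simpl; apply: in_or_app; tauto.
  + case: (lam_or t2) => [[s Hts]|Hs]; first by subst t2; apply: (Hat1 (Lam s)); [apply: in_or_app; right; left| exact: Xu].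
    apply: (IHt t2 (ord_plusr H1) Hs) => // a Ha; apply: Hat1; simpl; apply: in_or_app; tauto.
- apply: (c7 HY H2); apply/(c5 HY); split; apply: IHu;
   [exact: (ord_plusl H1)| exact: (cand_plus_l HX H1 Xu)| exact: (ord_plusr H1)| exact: (cand_plus_r HX H1 Xu)].
- have Hat1 := PE_In (@arr_ac) (ac_atoms H1) Hat.
  apply: (c7 HY H2); apply/(c6 HY).
  case: (lam_or t0) => [[s Hts]|Hs]; first by subst t0; exact: (Hat1 (Lam s) (or_introl erefl) u Xu).
  by apply: (IHt t0 (ord_scal H1) Hs).
- apply: (c7 HY H2); apply/(c6 HY); apply: IHu; [exact: (ord_scal H1)| exact: (cand_scal HX H1 Xu)].
- apply: (c7 HY H2); exact: (c4 HY).
- apply: (c7 HY H2); exact: (c4 HY).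
- by case: (Hnl s).
Qed.

Lemma arr_alg t : (forall a, In a (atoms t) -> arr X Y a) -> arr X Y t.
Proof.
move=> Hat; case: (lam_or t) => [[s Hts]|Hs]; first by subst t; exact: (Hat _ (or_introl erefl)).
apply: (arr_alg_core _ Hs Hat); apply: SN_ord; apply: alg_SN => a Ha; apply: arr_SN; exact: (Hat _ Ha).
Qed.

Lemma cand_arr : cand (arr X Y).
Proof.
constructor.
- exact: arr_SN.
- move=> t t' H HR; exact: (arr_R HR H).
- exact: arr_neutral.
- by apply: arr_alg.
- move=> t r; split; first exact: arr_plus.
  move=> [Ht Hr]; apply: arr_alg => a /= Ha; case: (in_app_or _ _ _ Ha) => Ha'.
  + exact: (arr_atoms Ht Ha').
  + exact: (arr_atoms Hr Ha').
- move=> c t; split; first exact: arr_scal.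
  move=> Ht; apply: arr_alg => a /= Ha; exact: (arr_atoms Ht Ha).
- move=> t t' H Ht; exact: (arr_ac H Ht).
Qed.

Lemma arr_lam s : (forall b, X b -> basis b -> Y (subst 0 b s)) -> arr X Y (Lam s).
Proof.
move=> H.
have HSN : SNR s.
  have := c1 HY (H _ (cand_var 0 HX) I).
  exact: (@SN_map (fun x => subst 0 (Var S 0) x) (fun a b => @R_subst (Var S 0) a b 0 I) s).
elim: HSN H => {s} s _ IHs H u Xu.
have Hacc := SN_ord (c1 HX Xu); move: Xu; elim: Hacc => {u} u _ IHu Xu.
apply: (c3 HY) => // w Hw.
case: (R_app_inv Hw) =>
  [[t' [H1 H2]]|[[u' [H1 H2]]|[[t1 [t2 [H1 H2]]]|[[u1 [u2 [H1 H2]]]|[[c [t0 [H1 H2]]]|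
   [[c [u0 [H1 H2]]]|[[H1 H2]|[[H1 H2]|[s' [v [H1 [H2 [Hv H3]]]]]]]]]]]]].
- case: (R_lam_inv H1) => s2 [Hs2 Hac].
  apply: (c7 HY H2); apply: (c7 HY (t := App (Lam s2) u)); first by apply: ac_app => //; exact: ac_refl.
  apply: (IHs s2 Hs2) => // b Xb Hb; apply: (c2 HY (H b Xb Hb)); exact: R_subst.
- apply: (c7 HY H2); apply: IHu; [exact: ord_R| exact: (c2 HX Xu H1)].
- by have := ac_topP H1.
- apply: (c7 HY H2); apply/(c5 HY); split; apply: IHu;
   [exact: (ord_plusl H1)| exact: (cand_plus_l HX H1 Xu)| exact: (ord_plusr H1)| exact: (cand_plus_r HX H1 Xu)].
- by have := ac_topP H1.
- apply: (c7 HY H2); apply/(c6 HY); apply: IHu; [exact: (ord_scal H1)| exact: (cand_scal HX H1 Xu)].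
- by have := ac_topP H1.
- apply: (c7 HY H2); exact: (c4 HY).
- have Hs' : ac_eq s s' := ac_topP H1.
  have Hu : basis u := basis_ac H2 Hv.
  apply: (c7 HY (ac_trans (ac_subst 0 H2 Hs') H3)); exact: H.
Qed.

End Arr.


Definition tcons (X : tm -> Prop) (rho : nat -> tm -> Prop) (n : nat) : tm -> Prop :=
  match n with 0 => X | k.+1 => rho k end.

Fixpoint interp (A : ty) (rho : nat -> tm -> Prop) : tm -> Prop :=
  match A with
  | TVar n => rho n
  | TArr A B => arr (interp A rho) (interp B rho)
  | TAll A => fun t => forall X, cand X -> interp A (tcons X rho) t
  end.

Lemma arr_iff X X' Y Y' : (forall t, X t <-> X' t) -> (forall t, Y t <-> Y' t) ->
  forall t, arr X Y t <-> arr X' Y' t.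
Proof.
move=> HX HY t; split => H u Hu.
- apply/HY; apply: H; exact/HX.
- apply/HY; apply: H; exact/HX.
Qed.

Lemma interp_ext A : forall rho rho', (forall n t, rho n t <-> rho' n t) ->
  forall t, interp A rho t <-> interp A rho' t.
Proof.
elim: A => [n|A IHA B IHB|A IHA] rho rho' H t /=.
- exact: H.
- apply: arr_iff => u; [exact: IHA| exact: IHB].
- have Hx : forall X n u, tcons X rho n u <-> tcons X rho' n u by move=> X [|k] u //=.
  split => Ht X HX.
  + apply/(IHA (tcons X rho) (tcons X rho') (Hx X)); exact: Ht.
  + apply/(IHA (tcons X rho) (tcons X rho') (Hx X)); exact: Ht.
Qed.

Lemma cand_inter (F : (tm -> Prop) -> tm -> Prop) : (forall X, cand X -> cand (F X)) ->
  cand (fun t => forall X, cand X -> F X t).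
Proof.
move=> HF; constructor.
- move=> t H; exact: (c1 (HF _ SN_cand) (H _ SN_cand)).
- move=> t t' H HR X HX; exact: (c2 (HF _ HX) (H X HX) HR).
- move=> t Hn H X HX; apply: (c3 (HF _ HX) Hn) => t' Ht'; exact: H.
- move=> X HX; exact: (c4 (HF _ HX)).
- move=> t r; split.
  + move=> H; split => X HX; have := proj1 (c5 (HF _ HX) t r) (H X HX); tauto.
  + move=> [H1 H2] X HX; apply/(c5 (HF _ HX)); split; [exact: H1| exact: H2].
- move=> c t; split.
  + move=> H X HX; exact: (proj1 (c6 (HF _ HX) c t) (H X HX)).
  + move=> H X HX; exact: (proj2 (c6 (HF _ HX) c t) (H X HX)).
- move=> t t' Hac H X HX; exact: (c7 (HF _ HX) Hac (H X HX)).
Qed.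

Lemma interp_cand A : forall rho, (forall n, cand (rho n)) -> cand (interp A rho).
Proof.
elim: A => [n|A IHA B IHB|A IHA] rho H /=.
- exact: H.
- apply: cand_arr; [exact: IHA| exact: IHB].
- apply: (cand_inter (F := fun X => interp A (tcons X rho))) => X HX.
  apply: IHA => -[|k] //=.
Qed.

Lemma interp_tlift A : forall d c rho t,
  interp (tlift d c A) rho t <-> interp A (fun n => rho (if (n < c)%N then n else n + d)) t.
Proof.
elim: A => [n|A IHA B IHB|A IHA] d c rho t /=.
- by case: ifP.
- apply: arr_iff => u; [exact: IHA| exact: IHB].
- split => Ht X HX.
  + apply/(interp_ext _ (rho := fun n => tcons X rho (if (n < c.+1)%N then n else n + d))).
      by move=> [|k] u //=; rewrite ltnS; case: ifP => //; rewrite addSn.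
    exact/IHA/Ht.
  + apply/IHA; apply/(interp_ext _ (rho' := tcons X (fun n => rho (if (n < c)%N then n else n + d)))); last exact: Ht.
    by move=> [|k] u //=; rewrite ltnS; case: ifP => //; rewrite addSn.
Qed.

Definition tsenv (n : nat) (B : ty) (rho : nat -> tm -> Prop) (m : nat) : tm -> Prop :=
  if (m < n)%N then rho m else if m == n then interp B (fun k => rho (k + n)) else rho m.-1.

Lemma interp_tsubst A : forall n B rho t,
  interp (tsubst n B A) rho t <-> interp A (tsenv n B rho) t.
Proof.
elim: A => [m|A IHA C IHC|A IHA] n B rho t /=.
- rewrite /tsenv; case: ifP => //= _; case: ifP => //= _.
  rewrite interp_tlift; apply: interp_ext => k u /=; by [].
- apply: arr_iff => u; [exact: IHA| exact: IHC].
- have Henv : forall X k u, tsenv n.+1 B (tcons X rho) k u <-> tcons X (tsenv n B rho) k u.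
    move=> X [|k] u //=; rewrite /tsenv ltnS eqSS; case: ifP => //= Hlt; case: ifP => Heq.
    + by apply: interp_ext => j v /=; rewrite addnS.
    + case: k Hlt Heq => [|k] Hlt Heq //=; by case: n Hlt Heq.
  split => Ht X HX.
  + apply/(interp_ext _ (rho := tsenv n.+1 B (tcons X rho))); first exact: Henv.
    exact/IHA/Ht.
  + apply/IHA; apply/(interp_ext _ (rho' := tcons X (tsenv n B rho))); last exact: Ht.
    move=> k u; exact: Henv.
Qed.

Lemma fund G t A : typed G t A -> forall rho, (forall n, cand (rho n)) ->
  forall sg, (forall n B, onth G n = Some B -> interp B rho (sg n)) -> interp A rho (psub sg t).
Proof.
elim=> {G t A}.
- move=> G n A HA rho Hrho sg Hsg /=; exact: Hsg.
- move=> G t A B _ IH rho Hrho sg Hsg /=.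
  apply: arr_lam; [exact: interp_cand| exact: interp_cand|] => b Xb Hb.
  rewrite subst_ups; apply: IH => // -[|k] C /=; [by move=> [<-]| exact: Hsg].
- move=> G t r A B _ IH1 _ IH2 rho Hrho sg Hsg /=.
  exact: (IH1 rho Hrho sg Hsg _ (IH2 rho Hrho sg Hsg)).
- move=> G t A B _ IH rho Hrho sg Hsg.
  have H := IH rho Hrho sg Hsg (interp B rho) (interp_cand B Hrho).
  apply/interp_tsubst; apply/(interp_ext _ (rho := tcons (interp B rho) rho)); last exact: H.
  move=> [|k] u; rewrite /tsenv //=.
  by apply: interp_ext => j v; rewrite addn0.
- move=> G t A _ IH rho Hrho sg Hsg /= X HX.
  apply: IH; first by move=> [|k] //=.
  move=> n B; rewrite onth_map; case Hn: (onth G n) => [C|] //= [<-].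
  apply/interp_tlift; apply/(interp_ext _ (rho' := rho)); last exact: Hsg.
  by move=> k u /=; rewrite addn1.
- move=> G A rho Hrho sg Hsg /=; exact: (c4 (interp_cand A Hrho)).
- move=> G t r A _ IH1 _ IH2 rho Hrho sg Hsg /=.
  apply/(c5 (interp_cand A Hrho)); split; [exact: IH1| exact: IH2].
- move=> G a t A _ IH rho Hrho sg Hsg /=.
  apply/(c6 (interp_cand A Hrho)); exact: IH.
Qed.

Lemma head_True (N : tm -> Prop) a b : Defs.head N a b -> Defs.head (fun _ => True) a b.
Proof. case=> *; by constructor. Qed.

Lemma ctx_True (N : tm -> Prop) a b : ctx N a b -> ctx' a b.
Proof.
elim=> {a b}.
- move=> a b H; apply: c_head; exact: (head_True H).
- move=> t t' _ H; exact: (c_lam H).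
- move=> t t' r _ H; exact: (c_appl _ H).
- move=> t r r' _ H; exact: (c_appr _ H).
- move=> c t t' _ H; exact: (c_scal _ H).
- move=> t t' r _ H; exact: (c_plusl _ H).
- move=> t r r' _ H; exact: (c_plusr _ H).
Qed.

Lemma SNR_SN t : SNR t -> SN t.
Proof.
elim=> {t} t _ IH; constructor => t' [x [y [H1 H2 H3]]]; apply: IH.
exists x, y; split => //; exact: ctx_True H2.
Qed.

Lemma typed_SN G (t : tm) A : typed G t A -> SN t.
Proof.
move=> H; apply: SNR_SN.
have Hc : forall n : nat, cand ((fun _ : nat => SNR) n) by move=> n; exact: SN_cand.
have := fund H Hc (sg := Var S) (fun n B _ => cand_var n (interp_cand B Hc)).
rewrite psub_id; exact: (c1 (interp_cand A Hc)).
Qed.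

End L.

Theorem mainTheorem3 (S : comPzRingType) (G : seq ty) (t : term S) (A : ty) :
  typed G t A -> SN t.
Proof. exact: typed_SN. Qed.
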